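(* For every integer $n\ge 0$, $c_{11}(11n+5)\equiv c_{11}(11n+7)\equiv c_{11}(11n+9)\equiv 0\pmod 2$.
   Context: A partition of $n\ge 0$ is a finite multiset of positive integers summing to $n$. For $n\ge 0$, $c_{11}(n)$ denotes the number of pairs $(j,\lambda)$, where $j\ge 1$ is an integer and $\lambda$ is a partition of $n$, such that: each of the odd integers $1,3,\dots,2j-1$ appears in $\lambda$ at least once; odd parts are otherwise unrestricted in multiplicity; every even part of $\lambda$ is greater than $2j$; and the even parts of $\lambda$ are distinct. (A single partition is counted once for each $j$ for which these conditions hold.) *)

(* Defs.v *)
From mathcomp Require Import all_boot.
Set Implicit Arguments. Unset Strict Implicit. Unset Printing Implicit Defensive.

(* A partition of n is encoded by its multiplicity function: m k = number of
   times the part k occurs.  Every multiplicity of a positive part is <= n and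
   every part is <= n, so m : {ffun 'I_n.+1 -> 'I_n.+1} suffices; the
   conditions "part 0 does not occur" and "sum k * m k = n" are imposed in
   [is_partition].  This is a bijective encoding of multisets of positive
   integers summing to n. *)
Definition mult (n : nat) (m : {ffun 'I_n.+1 -> 'I_n.+1}) (k : nat) : nat :=
  if k < n.+1 then nat_of_ord (m (inord k)) else 0.

Definition is_partition (n : nat) (m : {ffun 'I_n.+1 -> 'I_n.+1}) : bool :=
  (mult m 0 == 0) && (\sum_(k < n.+1) k * mult m k == n).

Definition c11_cond (n j : nat) (m : {ffun 'I_n.+1 -> 'I_n.+1}) : bool :=
  [&& 0 < j,
      [forall i : 'I_j, 0 < mult m (2 * i + 1)],
      [forall k : 'I_n.+1,
         (~~ odd k && (0 < mult m k)) ==> ((2 * j < k) && (mult m k <= 1))]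
    & is_partition m].

(* c_11(n): number of pairs (j, lambda).  Any valid j satisfies
   j^2 = 1 + 3 + ... + (2j-1) <= n, hence j <= n, so ranging j over 'I_n.+1
   loses nothing. *)
Definition c11 (n : nat) : nat :=
  #|[set p : 'I_n.+1 * {ffun 'I_n.+1 -> 'I_n.+1} | c11_cond (nat_of_ord p.1) p.2]|.

(* Main.v *)
Require Import Defs.
From mathcomp Require Import all_boot.
From mathcomp Require Import all_order all_algebra.
From mathcomp Require Import zify ring.
Set Implicit Arguments. Unset Strict Implicit. Unset Printing Implicit Defensive.
Import GRing.Theory.

Local Open Scope ring_scope.

Local Notation F := 'F_2.
Local Notation P := {poly 'F_2}.

Lemma two0 : (2%:R : F) = 0.
Proof. exact: pchar_Fp_0. Qed.

Lemma addpp (p : P) : p + p = 0.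
Proof.
apply/polyP => i; rewrite coefD coef0.
by apply: (addrr_pchar2 (pchar_Fp (isT : prime 2))).
Qed.

Lemma oppP (p : P) : - p = p.
Proof. by apply/eqP; rewrite eq_sym -subr_eq0 opprK addpp. Qed.

Lemma addKp (p q : P) : p + (p + q) = q.
Proof. by rewrite addrA addpp add0r. Qed.

Definition cg (M : nat) (p q : P) := 'X^M %| (p - q).

Lemma cg_refl M p : cg M p p.
Proof. by rewrite /cg subrr dvdp0. Qed.

Lemma cg_sym M p q : cg M p q -> cg M q p.
Proof. by rewrite /cg -opprB dvdpNr. Qed.

Lemma cg_trans M p q r : cg M p q -> cg M q r -> cg M p r.
Proof.
rewrite /cg => h1 h2; have := dvdp_add h1 h2.
by rewrite addrA subrK.
Qed.

Lemma cg_add M p q r s : cg M p q -> cg M r s -> cg M (p + r) (q + s).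
Proof.
rewrite /cg => h1 h2; have := dvdp_add h1 h2.
by rewrite opprD addrACA.
Qed.

Lemma cg_mull M p q r : cg M p q -> cg M (r * p) (r * q).
Proof. by rewrite /cg -mulrBr => h; apply: dvdp_mull. Qed.

Lemma cg_mulr M p q r : cg M p q -> cg M (p * r) (q * r).
Proof. by rewrite ![_ * r]mulrC; apply: cg_mull. Qed.

Lemma cg_mul M p q r s : cg M p q -> cg M r s -> cg M (p * r) (q * s).
Proof. by move=> h1 h2; apply: cg_trans (cg_mulr _ h1) (cg_mull _ h2). Qed.

Lemma cg_le M M' p q : (M' <= M)%N -> cg M p q -> cg M' p q.
Proof. by rewrite /cg => le h; apply: dvdp_trans h; apply: dvdp_exp2l. Qed.

Lemma cgX0 M e r : (M <= e)%N -> cg M ('X^e * r) 0.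
Proof. by rewrite /cg subr0 => le; apply: dvdp_mulr; apply: dvdp_exp2l. Qed.

Lemma cg_coef M p q i : cg M p q -> (i < M)%N -> p`_i = q`_i.
Proof.
rewrite /cg => /divpK h lt; apply/eqP; rewrite -subr_eq0 -coefB -h.
by rewrite coefMXn lt.
Qed.

Lemma cg_addl0 M p q : cg M q 0 -> cg M (p + q) p.
Proof. by move=> h; rewrite -{2}(addr0 p); apply: cg_add (cg_refl _ _) h. Qed.

Lemma cg_sum M (I : Type) (r : seq I) (Pr : pred I) (f g : I -> P) :
  (forall i, Pr i -> cg M (f i) (g i)) ->
  cg M (\sum_(i <- r | Pr i) f i) (\sum_(i <- r | Pr i) g i).
Proof.
move=> h; apply: (big_ind2 (cg M)); first exact: cg_refl.
  by move=> *; apply: cg_add.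
exact: h.
Qed.

Lemma cg_prod M (I : Type) (r : seq I) (Pr : pred I) (f g : I -> P) :
  (forall i, Pr i -> cg M (f i) (g i)) ->
  cg M (\prod_(i <- r | Pr i) f i) (\prod_(i <- r | Pr i) g i).
Proof.
move=> h; apply: (big_ind2 (cg M)); first exact: cg_refl.
  by move=> *; apply: cg_mul.
exact: h.
Qed.

Lemma cg_sum0 M (I : Type) (r : seq I) (Pr : pred I) (f : I -> P) :
  (forall i, Pr i -> cg M (f i) 0) -> cg M (\sum_(i <- r | Pr i) f i) 0.
Proof.
move=> h; have := @cg_sum M I r Pr f (fun _ => 0) h; by rewrite big1_eq.
Qed.

Fixpoint tri n := if n is m.+1 then (tri m + n)%N else 0%N.

Lemma tri2 n : (2 * tri n = n * n.+1)%N.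
Proof. elim: n => //= n IH; lia. Qed.

Local Open Scope ring_scope.

Definition Rp (k n : nat) : P := \prod_(k.+1 <= i < n.+1) (1 + 'X^i).
Definition Gs (n m : nat) : P := \sum_(0 <= k < n.+1) 'X^(m * k + tri k) * Rp k n.

Lemma Rp_nn n : Rp n n = 1.
Proof. by rewrite /Rp big_geq. Qed.

Lemma Rp_S k n : (k < n)%N -> Rp k n = (1 + 'X^(k.+1)) * Rp k.+1 n.
Proof. by move=> lt; rewrite /Rp big_ltn. Qed.

Lemma Rp_nS k n : (k <= n)%N -> Rp k n.+1 = Rp k n * (1 + 'X^(n.+1)).
Proof. by move=> le; rewrite /Rp big_nat_recr. Qed.

Lemma Gs_nS n m : Gs n.+1 m = (1 + 'X^(n.+1)) * Gs n m + 'X^(m * n.+1 + tri n.+1).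
Proof.
rewrite /Gs big_nat_recr //= Rp_nn mulr1 mulr_sumr; congr (_ + _).
rewrite !big_nat; apply: eq_bigr => k /andP[_ lt]; rewrite Rp_nS; last by rewrite -ltnS.
by rewrite mulrA mulrC.
Qed.

Lemma Gs_mS n m :
  Gs n m = (1 + 'X^(m.+1)) * Gs n m.+1 + 'X^(m.+1 * n.+1 + tri n).
Proof.
set b := 'X^(m.+1 * n.+1 + tri n).
suff -> : (1 + 'X^(m.+1)) * Gs n m.+1 = Gs n m + b by rewrite -addrA addpp addr0.
set g := fun k => 'X^(m * k + tri k) * Rp k n.
set a := fun k => 'X^(m.+1 * k + tri k) * Rp k n.
have e1 : Gs n m.+1 = g 0%N + \sum_(0 <= k < n) a k.+1.
  by rewrite /Gs big_nat_recl //= /g !muln0.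
have e2 : 'X^(m.+1) * Gs n m.+1 = \sum_(0 <= k < n) 'X^(m.+1) * a k + b.
  rewrite /Gs mulr_sumr big_nat_recr //=; congr (_ + _).
  by rewrite /b Rp_nn mulr1 -exprD; congr ('X^_); lia.
have e3 : Gs n m = g 0%N + \sum_(0 <= k < n) g k.+1.
  by rewrite /Gs big_nat_recl.
have e4 : forall k, (k < n)%N -> a k.+1 + 'X^(m.+1) * a k = g k.+1.
  move=> k lt; rewrite /a /g (Rp_S lt) mulrA -exprD.
  have -> : (m.+1 + (m.+1 * k + tri k) = m * k.+1 + tri k.+1)%N by simpl; lia.
  have -> : (m.+1 * k.+1 + tri k.+1 = m * k.+1 + tri k.+1 + k.+1)%N by simpl; lia.
  rewrite exprD; set A := 'X^(_ + _); set B := Rp _ _.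
  have -> : A * ((1 + 'X^(k.+1)) * B) = A * B + A * 'X^(k.+1) * B by ring.
  by rewrite addrCA addpp addr0.
transitivity ((g 0%N + \sum_(0 <= k < n) a k.+1) +
   (\sum_(0 <= k < n) 'X^(m.+1) * a k + b)).
  by rewrite mulrDl mul1r; congr (_ + _).
rewrite e3 addrA -[g 0%N + _ + _]addrA -big_split /=.
congr (_ + _ + _); rewrite !big_nat; apply: eq_bigr => k /andP[_ lt].
exact: e4.
Qed.

Fixpoint pent (n : nat) : P :=
  if n is n'.+1 then pent n' + 'X^(n * n + tri n) + 'X^(n * n + tri n')
  else 1.

Lemma Gs_pent n : Gs n n = pent n.
Proof.
elim: n => [|n IH]; first by rewrite /Gs big_nat1 Rp_nn /= mulr1 expr0.
rewrite Gs_nS /= -IH (Gs_mS n n).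
set Z := (1 + _) * _.
rewrite -!addrA; congr (_ + _); rewrite addrCA.
by rewrite addpp addr0.
Qed.

Lemma Gs_trunc n : cg n.+1 (Gs n n) (Rp 0 n).
Proof.
rewrite /Gs big_nat_recl //= muln0 addn0 expr0 mul1r.
apply: cg_addl0; apply: cg_sum0 => k _; apply: cgX0; lia.
Qed.

Lemma pent_trunc n : cg n.+1 (pent n) (Rp 0 n).
Proof. by rewrite -Gs_pent; apply: Gs_trunc. Qed.

Local Open Scope ring_scope.

Definition R2 (k n : nat) : P := \prod_(k.+1 <= i < n.+1) (1 + 'X^(2 * i)).
Definition D (s : nat) : P := \prod_(0 <= i < s) (1 + 'X^(2 * i + 1)).
Definition G2 (n m : nat) : P := \sum_(0 <= j < n.+1) 'X^(2 * m * j + j * j) * R2 j n.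

Lemma R2_nn n : R2 n n = 1.
Proof. by rewrite /R2 big_geq. Qed.

Lemma R2_S k n : (k < n)%N -> R2 k n = (1 + 'X^(2 * k.+1)) * R2 k.+1 n.
Proof. by move=> lt; rewrite /R2 big_ltn. Qed.

Lemma R2_nS k n : (k <= n)%N -> R2 k n.+1 = R2 k n * (1 + 'X^(2 * n.+1)).
Proof. by move=> le; rewrite /R2 big_nat_recr. Qed.

Lemma D_S s : D s.+1 = D s * (1 + 'X^(2 * s + 1)).
Proof. by rewrite /D big_nat_recr. Qed.

Lemma D0 : D 0 = 1.
Proof. by rewrite /D big_geq. Qed.

Lemma G2_mS n m :
  G2 n m = (1 + 'X^(2 * m + 1)) * G2 n m.+1 + 'X^(2 * m + 1 + 2 * m.+1 * n + n * n).
Proof.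
set b := 'X^(2 * m + 1 + 2 * m.+1 * n + n * n).
suff -> : (1 + 'X^(2 * m + 1)) * G2 n m.+1 = G2 n m + b by rewrite -addrA addpp addr0.
set g := fun k => 'X^(2 * m * k + k * k) * R2 k n.
set a := fun k => 'X^(2 * m.+1 * k + k * k) * R2 k n.
have e1 : G2 n m.+1 = g 0%N + \sum_(0 <= k < n) a k.+1.
  by rewrite /G2 big_nat_recl //= /g !muln0.
have e2 : 'X^(2 * m + 1) * G2 n m.+1 = \sum_(0 <= k < n) 'X^(2 * m + 1) * a k + b.
  rewrite /G2 mulr_sumr big_nat_recr //=; congr (_ + _).
  by rewrite /b R2_nn mulr1 -exprD; congr ('X^_); lia.
have e3 : G2 n m = g 0%N + \sum_(0 <= k < n) g k.+1.
  by rewrite /G2 big_nat_recl.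
have e4 : forall k, (k < n)%N -> a k.+1 + 'X^(2 * m + 1) * a k = g k.+1.
  move=> k lt; rewrite /a /g (R2_S lt) mulrA -exprD.
  have -> : (2 * m + 1 + (2 * m.+1 * k + k * k) = 2 * m * k.+1 + k.+1 * k.+1)%N by lia.
  have -> : (2 * m.+1 * k.+1 + k.+1 * k.+1 = 2 * m * k.+1 + k.+1 * k.+1 + 2 * k.+1)%N by lia.
  rewrite exprD; set A := 'X^(_ + _); set B := R2 _ _.
  have -> : A * ((1 + 'X^(2 * k.+1)) * B) = A * B + A * 'X^(2 * k.+1) * B by ring.
  by rewrite addrCA addpp addr0.
transitivity ((g 0%N + \sum_(0 <= k < n) a k.+1) +
   (\sum_(0 <= k < n) 'X^(2 * m + 1) * a k + b)).
  by rewrite mulrDl mul1r; congr (_ + _).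
rewrite e3 addrA -[g 0%N + _ + _]addrA -big_split /=.
congr (_ + _ + _); rewrite !big_nat; apply: eq_bigr => k /andP[_ lt].
exact: e4.
Qed.

Lemma G2_iter n m : cg (n.+1 * n.+1) (G2 n 0) (D m * G2 n m).
Proof.
elim: m => [|m IH]; first by rewrite D0 mul1r; apply: cg_refl.
apply: cg_trans IH _; rewrite (G2_mS n m) D_S mulrDr mulrA.
apply: cg_addl0; rewrite mulrC; apply: cgX0; nia.
Qed.

Lemma G2_trunc n m : cg (2 * m + 1) (G2 n m) (R2 0 n).
Proof.
rewrite /G2 big_nat_recl //= !muln0 addn0 expr0 mul1r.
apply: cg_addl0; apply: cg_sum0 => k _; apply: cgX0; nia.
Qed.

Lemma G2_main N : cg N.+1 (G2 N 0) (D N * R2 0 N).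
Proof.
apply: cg_trans (cg_le _ (G2_iter N N)) _; first nia.
apply: cg_mull; apply: cg_le (G2_trunc N N); lia.
Qed.

Definition hh (n m s : nat) : P := 'X^(s * (2 * m + 1)) * R2 s n * D s.
Definition H (n m : nat) : P := \sum_(0 <= s < n.+1) hh n m s.
Definition psi (k : nat) : P := \sum_(0 <= j < k.+1) 'X^(tri j).

Lemma H_nS n m : H n.+1 m = (1 + 'X^(2 * n.+1)) * H n m + 'X^(n.+1 * (2 * m + 1)) * D n.+1.
Proof.
rewrite /H big_nat_recr //= /hh R2_nn mulr1 mulr_sumr; congr (_ + _).
rewrite !big_nat; apply: eq_bigr => s /andP[_ lt]; rewrite /hh R2_nS; last by rewrite -ltnS.
by ring.
Qed.

Lemma H_mS n m :
  H n m + H n m.+1 =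
  'X^(2 * m + 1) * (H n m + hh n m n + 'X * (H n m.+1 + hh n m.+1 n)).
Proof.
have e1 : H n m + H n m.+1 = \sum_(0 <= t < n) (hh n m t.+1 + hh n m.+1 t.+1).
  rewrite /H -big_split big_nat_recl //= /hh !mul0n expr0 D0 addpp add0r.
  by [].
have e2 : H n m + hh n m n = \sum_(0 <= t < n) hh n m t.
  by rewrite /H big_nat_recr //= -addrA addpp addr0.
have e3 : H n m.+1 + hh n m.+1 n = \sum_(0 <= t < n) hh n m.+1 t.
  by rewrite /H big_nat_recr //= -addrA addpp addr0.
rewrite e1 e2 e3 mulr_sumr -big_split /= mulr_sumr.
rewrite !big_nat; apply: eq_bigr => t /andP[_ lt].
rewrite /hh (R2_S lt) D_S.
set A := R2 t.+1 n; set B := D t.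
have -> : (t.+1 * (2 * m + 1) = 2 * m + 1 + t * (2 * m + 1))%N by lia.
have -> : (t.+1 * (2 * m.+1 + 1) = (2 * m + 1) + t * (2 * m + 1) + (2 * t + 2))%N by lia.
have -> : (t * (2 * m.+1 + 1) = t * (2 * m + 1) + 2 * t)%N by lia.
have -> : (2 * t.+1 = 2 * t + 2)%N by lia.
rewrite !exprD expr1; ring.
Qed.

Lemma psiSS n : psi (2 * n.+1) = psi (2 * n) + 'X^(tri (2 * n).+1) + 'X^(tri (2 * n).+2).
Proof.
rewrite /psi (_ : (2 * n.+1).+1 = (2 * n).+1.+2)%N; last by lia.
by rewrite !big_nat_recr //= addrA.
Qed.

Lemma add0_eq (a b : P) : a + b = 0 -> a = b.
Proof. by move=> h; rewrite -[b]add0r -h -addrA addpp addr0. Qed.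

Lemma H_gauss n : H n n = D n * psi (2 * n).
Proof.
elim: n => [|n IH].
  by rewrite /H /psi !big_nat1 /hh R2_nn D0 !mulr1 mul0n expr0.
rewrite H_nS.
have hm := H_mS n n.
have h2 : 'X^(2 * n.+1) = 'X^(2 * n + 1) * 'X :> P.
  by rewrite -exprSr; congr ('X^_); lia.
have e : (1 + 'X^(2 * n.+1)) * H n n.+1 =
  (1 + 'X^(2 * n + 1)) * H n n + 'X^(2 * n + 1) * hh n n n
  + 'X^(2 * n + 1) * 'X * hh n n.+1 n.
  apply: add0_eq; rewrite h2.
  set U := 'X^(2 * n + 1).
  transitivity ((H n n + H n n.+1) + U * (H n n + hh n n n + 'X * (H n n.+1 + hh n n.+1 n))).
    by ring.
  by rewrite hm addpp.
rewrite e IH D_S psiSS /hh R2_nn !mulr1.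
have t2 := tri2 (2 * n).
have -> : (n * (2 * n + 1) = tri (2 * n))%N by nia.
have -> : (n * (2 * n.+1 + 1) = tri (2 * n) + 2 * n)%N by nia.
have -> : (n.+1 * (2 * n.+1 + 1) = tri (2 * n) + 2 * n + 1 + 2 * n + 1 + 1)%N by nia.
have -> : (tri (2 * n).+2 = tri (2 * n) + 2 * n + 1 + 2 * n + 1 + 1)%N by rewrite /=; lia.
have -> : (tri (2 * n).+1 = tri (2 * n) + 2 * n + 1)%N by rewrite /=; lia.
rewrite !exprD !expr1; ring.
Qed.

Lemma H_trunc n : cg (2 * n + 1) (H n n) (R2 0 n).
Proof.
rewrite /H big_nat_recl //= /hh mul0n expr0 mul1r D0 mulr1.
apply: cg_addl0; apply: cg_sum0 => k _; rewrite -mulrA; apply: cgX0; nia.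
Qed.

Local Open Scope ring_scope.

Definition bad (N : nat) := [|| N %% 11 == 5, N %% 11 == 7 | N %% 11 == 9]%N.

Lemma mod11_poly (j : nat) (f : nat -> nat) (c : nat -> nat -> nat) :
  (forall q r, f (q * 11 + r) = c q r * 11 + f r)%N ->
  (f j %% 11 = f (j %% 11) %% 11)%N.
Proof.
move=> h; rewrite {1}(divn_eq j 11) h.
by rewrite modnMDl.
Qed.

Lemma bad_pent1 N j : bad N -> N <> (j * (3 * j + 1))%N.
Proof.
move=> hb e; move: hb; rewrite /bad e.
rewrite (@mod11_poly j (fun j => j * (3 * j + 1))%N
   (fun q r => q * (33 * q + 6 * r + 1))%N); last by move=> q r; nia.
have : (j %% 11 < 11)%N by rewrite ltn_pmod.
move: (j %% 11)%N => r.
by do 11?[case: r => [|r] //].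
Qed.

Lemma bad_pent2 N j : bad N -> N <> (j.+1 * (3 * j + 2))%N.
Proof.
move=> hb e; move: hb; rewrite /bad e.
rewrite (@mod11_poly j (fun j => j.+1 * (3 * j + 2))%N
   (fun q r => q * (33 * q + 6 * r + 5))%N); last by move=> q r; nia.
have : (j %% 11 < 11)%N by rewrite ltn_pmod.
move: (j %% 11)%N => r.
by do 11?[case: r => [|r] //].
Qed.

Lemma bad_tri N j : bad N -> N <> tri j.
Proof.
move=> hb e.
have e2 : (2 * N = j * j.+1)%N by rewrite e tri2.
have : ((2 * N) %% 11 = (j * j.+1) %% 11)%N by rewrite e2.
rewrite (@mod11_poly j (fun j => j * j.+1)%N
   (fun q r => q * (11 * q + 2 * r + 1))%N); last by move=> q r; nia.
rewrite -modnMmr.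
move: hb; rewrite /bad.
have : (j %% 11 < 11)%N by rewrite ltn_pmod.
move: (j %% 11)%N => r.
have : (N %% 11 < 11)%N by rewrite ltn_pmod.
move: (N %% 11)%N => s.
by do 11?[case: s => [|s] //]; do 11?[case: r => [|r] //].
Qed.

Lemma sq_add (a b : P) : (a + b) ^+ 2 = a ^+ 2 + b ^+ 2.
Proof.
have -> : (a + b) ^+ 2 = a ^+ 2 + b ^+ 2 + (a * b + a * b) by ring.
by rewrite addpp addr0.
Qed.

Lemma sqX e : ('X^e : P) ^+ 2 = 'X^(2 * e).
Proof. by rewrite -exprM mulnC. Qed.

Lemma pent_sq_coef N n : bad N -> ((pent n) ^+ 2)`_N = 0.
Proof.
move=> hb; elim: n => [|n IH] /=.
  rewrite expr1n coefC; case: N hb => //.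
rewrite !sq_add !sqX !coefD IH !coefXn add0r.
have t1 := tri2 n.
rewrite (_ : N == 2 * (n.+1 * n.+1 + (tri n + n.+1)) = false)%N; last first.
  apply/eqP => e; apply: (bad_pent1 (j := n.+1) hb); rewrite e; nia.
rewrite (_ : N == 2 * (n.+1 * n.+1 + tri n) = false)%N; last first.
  apply/eqP => e; apply: (bad_pent2 (j := n) hb); rewrite e; nia.
by rewrite addr0.
Qed.

Lemma psi_coef N k : bad N -> (psi k)`_N = 0.
Proof.
move=> hb; rewrite /psi coef_sum big1 // => j _; rewrite coefXn.
by case: eqP => // e; case: (bad_tri (j := j) hb).
Qed.

Lemma Rp_sq n : (Rp 0 n) ^+ 2 = R2 0 n.
Proof.
rewrite /Rp /R2 -prodrXl; apply: eq_bigr => i _.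
by rewrite sq_add expr1n sqX.
Qed.

Lemma cg_sq M (a b : P) : cg M a b -> cg M (a ^+ 2) (b ^+ 2).
Proof. by move=> h; apply: cg_mul. Qed.

Lemma D_at0 n : (D n).[0] = 1.
Proof.
rewrite /D horner_prod big1 // => i _.
by rewrite hornerD hornerC hornerXn expr0n addnS /= addr0.
Qed.

Lemma cg_cancelD M n (a b : P) : cg M (D n * a) (D n * b) -> cg M a b.
Proof.
rewrite /cg -mulrBr.
have cop : coprimep ('X^M) (D n).
  rewrite coprimep_sym; apply: coprimep_expr.
  by rewrite coprimepX /root D_at0 oner_eq0.
by rewrite Gauss_dvdpr.
Qed.

Lemma final_poly N (Cp : P) : bad N ->
  cg N.+1 (D N * Cp) (D N * R2 0 N + R2 0 N) -> Cp`_N = 0.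
Proof.
move=> hb h.
have h1 : cg N.+1 (R2 0 N) (D N * psi (2 * N)).
  rewrite -H_gauss; apply: cg_sym; apply: cg_le (H_trunc N); lia.
have h2 : cg N.+1 (D N * Cp) (D N * (R2 0 N + psi (2 * N))).
  apply: cg_trans h _; rewrite mulrDr; apply: cg_add (cg_refl _ _) h1.
have h3 := cg_cancelD h2.
have h4 : cg N.+1 (R2 0 N) (pent N ^+ 2).
  rewrite -Rp_sq; apply: cg_sq; apply: cg_sym; exact: pent_trunc.
rewrite (cg_coef h3 (ltnSn N)) coefD (cg_coef h4 (ltnSn N)).
by rewrite pent_sq_coef // psi_coef // addr0.
Qed.

Local Open Scope ring_scope.

Definition ok (j k a : nat) : bool :=
  if k == 0%N then a == 0%N
  else if odd k then (k < 2 * j)%N ==> (0 < a)%N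
  else (0 < a)%N ==> ((2 * j < k)%N && (a <= 1)%N).

Definition Pjk (N j k : nat) : P :=
  \sum_(a < N.+1) (if ok j k a then 'X^(k * a) else 0).

Definition Pi (N j : nat) : P := \prod_(k < N.+1) Pjk N j k.

Lemma count_coef N j :
  ((#|[set m : {ffun 'I_N.+1 -> 'I_N.+1} |
      [forall k : 'I_N.+1, ok j k (m k)] && (\sum_(k < N.+1) k * m k == N)%N]|)%:R : 'F_2)
  = (Pi N j)`_N.
Proof.
rewrite /Pi /Pjk bigA_distr_bigA /= coef_sum.
rewrite -sum1_card natr_sum.
rewrite [RHS](bigID (fun f : {ffun 'I_N.+1 -> 'I_N.+1} =>
   [forall k : 'I_N.+1, ok j k (f k)] && (\sum_(k < N.+1) k * f k == N)%N)) /=.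
rewrite [X in _ = _ + X]big1 ?addr0; last first.
  move=> f /negbTE hf.
  case: (boolP [forall k : 'I_N.+1, ok j k (f k)]) => [/forallP hall | /forallPn [k hk]].
    rewrite (eq_bigr (fun k : 'I_N.+1 => 'X^(k * f k))); last by move=> k _; rewrite hall.
    rewrite prodrXr coefXn; move: hf.
    have -> : [forall k : 'I_N.+1, ok j k (f k)] by apply/forallP.
    by move=> /= hf; rewrite eq_sym hf.
  by rewrite (bigD1 k) //= (negbTE hk) mul0r coef0.
rewrite big_set /=; apply: eq_bigr => f /andP[/forallP hall /eqP hs].
rewrite (eq_bigr (fun k : 'I_N.+1 => 'X^(k * f k))); last by move=> k _; rewrite hall.
by rewrite prodrXr coefXn {1}hs eqxx.
Qed.

Definition Q (k : nat) : P := if odd k then 1 + 'X^k else 1.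
Definition W (j k : nat) : P := if ~~ odd k && (2 * j < k)%N then 1 + 'X^k else 1.

Lemma geo (y : P) n : (1 + y) * \sum_(0 <= a < n) y ^+ a = 1 + y ^+ n.
Proof.
elim: n => [|n IH]; first by rewrite big_geq // mulr0 expr0 addpp.
rewrite big_nat_recr //= mulrDr IH exprS.
have -> : (1 + y) * y ^+ n = y ^+ n + y * y ^+ n by ring.
by rewrite addrA -[1 + _ + _]addrA addpp addr0.
Qed.

Lemma Pjk_nat N j k :
  Pjk N j k = \sum_(0 <= a < N.+1) (if ok j k a then 'X^(k * a) else 0).
Proof. by rewrite /Pjk big_mkord. Qed.

Lemma QP N j k : (0 < N)%N -> (k < N.+1)%N ->
  cg N.+1 (Q k * Pjk N j k) ('X^(if odd k && (k < 2 * j)%N then k else 0) * W j k).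
Proof.
move=> N0 kN; rewrite Pjk_nat /Q /W.
case: (posnP k) => [->|kp].
  rewrite /= mul1r mulr1 big_nat_recl //= big1 ?addr0.
    by rewrite /ok /= expr0; exact: cg_refl.
  by [].
have kn0 : (k == 0%N) = false by lia.
case: (boolP (odd k)) => ko /=.
  set y : P := 'X^k.
  have ey : forall a, 'X^(k * a) = y ^+ a by move=> a; rewrite /y exprM.
  case: (ltnP k (2 * j)) => kj /=.
    rewrite mulr1 big_nat_recl //= {1}/ok kn0 ko kj /=.
    rewrite (eq_bigr (fun a => y * y ^+ a)); last by move=> a _; rewrite /ok kn0 ko kj /= ey exprS.
    rewrite add0r -mulr_sumr mulrCA geo mulrDr mulr1 -exprS.
    apply: cg_addl0; rewrite /y -exprM -[X in cg _ X _]mulr1; apply: cgX0; nia.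
  rewrite expr0 !mulr1 (eq_bigr (fun a => y ^+ a)); last first.
    by move=> a _; rewrite /ok kn0 ko /= (_ : (k < 2 * j)%N = false) ?ey //; lia.
  rewrite geo; apply: cg_addl0; rewrite /y -exprM -[X in cg _ X _]mulr1; apply: cgX0; nia.
rewrite mul1r expr0 mul1r.
case: (ltnP (2 * j) k) => kj /=.
  case: N N0 kN => [//|N] N0 kN.
  rewrite big_nat_recl //= big_nat_recl //= big1 ?addr0.
    by rewrite /ok kn0 (negbTE ko) kj /= muln0 muln1 expr0; apply: cg_refl.
  by move=> a _; rewrite /ok kn0 (negbTE ko) /= andbF.
rewrite big_nat_recl //= big1 ?addr0.
  by rewrite /ok kn0 (negbTE ko) /= muln0 expr0; apply: cg_refl.
by move=> a _; rewrite /ok kn0 (negbTE ko) /= (_ : (2 * j < k)%N = false) //; lia.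
Qed.


Lemma Q_prod n : \prod_(0 <= k < 2 * n) Q k = D n.
Proof.
elim: n => [|n IH]; first by rewrite big_geq // D0.
rewrite (_ : 2 * n.+1 = (2 * n).+2)%N; last by lia.
have od : odd (2 * n) = false by rewrite mul2n odd_double.
rewrite !big_nat_recr //= IH D_S /Q od /= mulr1.
by rewrite od addn1.
Qed.

Lemma W_prod j n : \prod_(0 <= k < (2 * n).+1) W j k = R2 j n.
Proof.
elim: n => [|n IH].
  by rewrite big_nat1 /W /= /R2 big_geq.
rewrite (_ : (2 * n.+1).+1 = (2 * n).+3)%N; last by lia.
have od : odd (2 * n) = false by rewrite mul2n odd_double.
rewrite big_nat_recr //= big_nat_recr //= IH.
rewrite /W /= od /= mulr1.
case: (leqP j n) => jn.
  rewrite R2_nS // (_ : (2 * j < (2 * n).+2)%N = true); last by lia.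
  by rewrite (_ : (2 * n).+2 = 2 * n.+1)%N //; lia.
rewrite (_ : (2 * j < (2 * n).+2)%N = false); last by lia.
by rewrite !mulr1 /R2 !big_geq //; lia.
Qed.

Lemma odd_sum j : (\sum_(0 <= k < 2 * j) (if odd k then k else 0) = j * j)%N.
Proof.
elim: j => [|j IH]; first by rewrite big_geq.
rewrite (_ : 2 * j.+1 = (2 * j).+2)%N; last by lia.
have od : odd (2 * j) = false by rewrite mul2n odd_double.
rewrite big_nat_recr //= big_nat_recr //= IH od /=; lia.
Qed.

Lemma ext_prod M a b (f : nat -> P) : (a <= b)%N ->
  (forall k, (a <= k < b)%N -> cg M (f k) 1) ->
  cg M (\prod_(0 <= k < b) f k) (\prod_(0 <= k < a) f k).
Proof.
move=> ab h; rewrite (@big_cat_nat _ _ _ a 0 b _ _ (leq0n a) ab) /=.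
rewrite -[X in cg _ _ X]mulr1; apply: cg_mull.
have e : cg M (\prod_(a <= k < b) f k) (\prod_(a <= k < b) (1 : P)).
  by rewrite !big_nat; apply: cg_prod => k hk; exact: h.
by rewrite big1_eq in e.
Qed.

Lemma DPi N j : (0 < N)%N -> (2 * j <= N.+1)%N ->
  cg N.+1 (D N * Pi N j) ('X^(j * j) * R2 j N).
Proof.
move=> N0 jN.
have hQ : cg N.+1 (D N) (\prod_(k < N.+1) Q k).
  rewrite -Q_prod (_ : \prod_(k < N.+1) Q k = \prod_(0 <= k < N.+1) Q k);
    last by rewrite big_mkord.
  apply: ext_prod; first lia.
  move=> k /andP[k1 k2]; rewrite /Q; case: odd; last exact: cg_refl.
  apply: cg_addl0; rewrite -[X in cg _ X _]mulr1; apply: cgX0; lia.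
have hW : cg N.+1 (\prod_(k < N.+1) W j k) (R2 j N).
  rewrite -W_prod (_ : \prod_(k < N.+1) W j k = \prod_(0 <= k < N.+1) W j k);
    last by rewrite big_mkord.
  apply: cg_sym; apply: ext_prod; first lia.
  move=> k /andP[k1 k2]; rewrite /W; case: ifP => _; last exact: cg_refl.
  apply: cg_addl0; rewrite -[X in cg _ X _]mulr1; apply: cgX0; lia.
have hP : cg N.+1 (\prod_(k < N.+1) (Q k * Pjk N j k))
   (\prod_(k < N.+1) ('X^(if odd k && (k < 2 * j)%N then nat_of_ord k else 0%N) * W j k)).
  by apply: cg_prod => k _; exact: (@QP N j k N0 (ltn_ord k)).
have hs : (\sum_(k < N.+1) (if odd k && (k < 2 * j)%N then nat_of_ord k else 0%N) = j * j)%N.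
  rewrite (_ : \sum_(k < N.+1) _ = \sum_(0 <= k < N.+1) (if odd k && (k < 2 * j)%N then k else 0))%N;
    last by rewrite big_mkord.
  rewrite (@big_cat_nat _ _ _ (2 * j)) //=.
  rewrite [X in (_ + X)%N]big_nat_cond [X in (_ + X)%N]big1 ?addn0.
    rewrite -odd_sum big_nat_cond [RHS]big_nat_cond; apply: eq_bigr.
    by move=> k /andP[/andP[_ lt] _]; rewrite lt andbT.
  move=> k /andP[/andP[le _] _]; rewrite (_ : (k < 2 * j)%N = false) ?andbF //; lia.
apply: cg_trans (cg_mulr _ hQ) _.
rewrite /Pi -big_split /=.
apply: cg_trans hP _.
rewrite big_split /= prodrXr hs; exact: cg_mull.
Qed.

Local Close Scope ring_scope.

Lemma c11_sum N : c11 N = \sum_(j < N.+1) #|[set m : {ffun 'I_N.+1 -> 'I_N.+1} | c11_cond j m]|.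
Proof.
rewrite /c11 -sum1_card big_set /=.
rewrite -(pair_big_dep xpredT (fun (i : 'I_N.+1) (m : {ffun 'I_N.+1 -> 'I_N.+1}) => c11_cond i m)
   (fun _ _ => 1%N)) /=.
by apply: eq_bigr => j _; rewrite -sum1_card big_set.
Qed.

Lemma mult_ord N (m : {ffun 'I_N.+1 -> 'I_N.+1}) (k : 'I_N.+1) : mult m k = m k.
Proof. by rewrite /mult ltn_ord inord_val. Qed.

Lemma cond_eq N (j : nat) (m : {ffun 'I_N.+1 -> 'I_N.+1}) :
  c11_cond j m = [&& (0 < j)%N, (2 * j <= N.+1)%N,
     [forall k : 'I_N.+1, ok j k (m k)] & (\sum_(k < N.+1) k * m k == N)%N].
Proof.
rewrite /c11_cond /is_partition.
have -> : (\sum_(k < N.+1) k * mult m k = \sum_(k < N.+1) k * m k)%N.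
  by apply: eq_bigr => k _; rewrite mult_ord.
case: j => [|j] //=.
apply/idP/idP.
- case/and3P => /forallP hodd /forallP hev /andP[h0 ->].
  have h2 : (2 * j.+1 <= N.+1)%N.
    have := hodd (Ordinal (ltnSn j)); rewrite /mult /=.
    case: ifP => [lt _|]; first lia.
    by rewrite ltnn.
  rewrite h2 andbT /=; apply/forallP => k; rewrite /ok.
  case: eqP => [k0|k0].
    by move: h0; rewrite /mult /= -k0 inord_val.
  case: ifP => ko.
    apply/implyP => lt.
    have hi : (k./2 < j.+1)%N by lia.
    have := hodd (Ordinal hi); rewrite /=.
    have -> : (2 * k./2 + 1 = k)%N by have := odd_double_half k; rewrite ko -muln2; lia.
    by rewrite mult_ord.
  by have := hev k; rewrite ko /= mult_ord.
- case/and3P => h2 /forallP hok /eqP hs.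
  rewrite hs eqxx andbT; apply/and3P; split.
  + apply/forallP => i.
    have hk : (2 * i + 1 < N.+1)%N by have := ltn_ord i; lia.
    have := hok (Ordinal hk); rewrite /ok /=.
    have e : mult m (2 * i + 1) = m (Ordinal hk) by rewrite -(@mult_ord _ m (Ordinal hk)).
    rewrite e (_ : (2 * i + 1 == 0) = false); last by lia.
    rewrite (_ : odd (2 * i + 1) = true); last by rewrite addn1 /= mul2n odd_double.
    rewrite (_ : (2 * i + 1 < 2 * j.+1) = true) //; have := ltn_ord i; lia.
  + apply/forallP => k; apply/implyP => /andP[ke kp].
    move: (hok k); rewrite /ok (negbTE ke) -mult_ord kp /=.
    by case: eqP => // _ /eqP h; move: kp; rewrite h.
  + by have := hok ord0; rewrite /ok /= -(@mult_ord _ m ord0).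
Qed.

Local Open Scope ring_scope.

Definition valid (N j : nat) := (0 < j)%N && (2 * j <= N.+1)%N.

Definition Cp (N : nat) : P := \sum_(j < N.+1) (if valid N j then Pi N j else 0).

Lemma c11_F2 N : ((c11 N)%:R : 'F_2) = (Cp N)`_N.
Proof.
rewrite c11_sum natr_sum /Cp coef_sum; apply: eq_bigr => j _.
case: (boolP (valid N j)) => hv.
  rewrite -count_coef; congr (_%:R); apply: eq_card => m; rewrite !inE cond_eq.
  by case/andP: hv => -> ->.
rewrite coef0 (_ : [set m | c11_cond j m] = set0) ?cards0 //.
apply/setP => m; rewrite !inE cond_eq; move: hv; rewrite /valid.
by case: (0 < j)%N; case: (2 * j <= N.+1)%N.
Qed.

Lemma main_poly N : bad N -> (Cp N)`_N = 0.
Proof.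
move=> hb; have N0 : (0 < N)%N by move: hb; rewrite /bad; case: N.
apply: final_poly => //.
set t := fun j : nat => 'X^(j * j) * R2 j N.
set S := \sum_(j < N.+1) (if valid N j then t j else 0).
have h1 : cg N.+1 (D N * Cp N) S.
  rewrite /Cp mulr_sumr; apply: cg_sum => j _.
  case: (boolP (valid N j)) => [/andP[_ hj]|_]; last by rewrite mulr0; exact: cg_refl.
  exact: DPi.
have h2 : cg N.+1 (S + R2 0 N) (G2 N 0).
  set u := fun j : nat => if valid N j then 0 else t j.
  have eG : G2 N 0 = S + \sum_(j < N.+1) u j.
    rewrite /G2 big_mkord /S -big_split /=; apply: eq_bigr => j _.
    rewrite /u /t mul0n add0n; by case: valid; rewrite ?addr0 ?add0r.
  rewrite eG; apply: cg_add; first exact: cg_refl.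
  rewrite (bigD1 ord0) //= {1}/u /valid /= /t mul0n expr0 mul1r.
  apply: cg_sym; apply: cg_addl0; apply: cg_sum0 => j hj.
  rewrite /u; case: ifP => hv; first exact: cg_refl.
  rewrite /t; apply: cgX0.
  have j0 : (0 < j)%N by rewrite lt0n; move: hj; apply: contra => /eqP e; apply/eqP/val_inj.
  move: hv; rewrite /valid j0 /=; move/negbT; rewrite -ltnNge => lt; nia.
apply: cg_trans h1 _.
have h3 := cg_trans h2 (G2_main N).
have h4 := cg_add h3 (cg_refl N.+1 (R2 0 N)).
by rewrite -addrA addpp addr0 in h4.
Qed.

Lemma c11_even N : bad N -> c11 N = 0 %[mod 2].
Proof.
move=> hb; apply/eqP; rewrite mod0n -/(dvdn 2 _).
by rewrite (dvdn_pcharf (pchar_Fp (isT : prime 2))) c11_F2 main_poly.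
Qed.


Theorem mainTheorem12 (n : nat) :
  [/\ c11 (11 * n + 5) = 0 %[mod 2],
      c11 (11 * n + 7) = 0 %[mod 2] &
      c11 (11 * n + 9) = 0 %[mod 2]].
Proof.
have m5 : ((11 * n + 5) %% 11 = 5)%N by rewrite mulnC modnMDl.
have m7 : ((11 * n + 7) %% 11 = 7)%N by rewrite mulnC modnMDl.
have m9 : ((11 * n + 9) %% 11 = 9)%N by rewrite mulnC modnMDl.
by split; apply: c11_even; rewrite /bad ?m5 ?m7 ?m9.
Qed.
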